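(* Let $(\Omega,\mathcal H,\mathbb E)$ be a sublinear expectation space with $\mathbb E[\cdot]=\sup_{\theta\in\Theta}E_{P_\theta}[\cdot]$, where $\{P_\theta\}_{\theta\in\Theta}$ is a countably-dimensional weakly compact family of probability measures on $(\Omega,\sigma(\mathcal H))$. Let $X_1,X_2,\dots$ be a discrete IID source sequence on this space with values in a finite alphabet $\mathcal X$, let $p_\theta(x)=P_\theta(X_1=x)$, and let $d:\mathcal X\times\hat{\mathcal X}\to[0,\infty)$ be a distortion measure with $\hat{\mathcal X}$ finite. Then for any $D$, any $R_s>\hat R^I(D)$ and any $\epsilon>0$ there exist a sufficiently large $n$ and a $(\|\mathcal W\|,n,f_n,g_n)$ nonlinear source code with coding rate $R_s$ such that, with $\boldsymbol Q$ the corresponding transition probability matrix from $\mathcal X^n$ to $\hat{\mathcal X}^n$ (namely $\hat{\boldsymbol X}^n=g_n(f_n(\boldsymbol X^n))$), $$\mathcal E_{\boldsymbol Q}\big[d(\boldsymbol X^n,\hat{\boldsymbol X}^n)\big]=\inf_{\theta\in\Theta}E_{P_\theta}\big[d(\boldsymbol X^n,g_n(f_n(\boldsymbol X^n)))\big]\le D+\epsilon.$$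
   Context: Sublinear expectation space: $\mathcal H$ a linear space of real functions on $\Omega$ (containing constants, closed under $|\cdot|$ and bounded Borel functions of finitely many elements), $\mathbb E$ monotone, constant preserving, subadditive, positively homogeneous. Countably-dimensional weakly compact: for any bounded $Y_1,Y_2,\dots\in\mathcal H$ and any sequence $\{P_n\}\subset\{P_\theta\}$ there are a subsequence $\{n_k\}$ and $P\in\{P_\theta\}$ with $\lim_kP_{n_k}(\phi(Y_1,\dots,Y_d))=P(\phi(Y_1,\dots,Y_d))$ for every $d$ and bounded continuous $\phi$. IID: $\mathbb E[\phi(X_i)]=\mathbb E[\phi(X_j)]$ for all $i,j$ and bounded Borel $\phi$, and $\mathbb E[\phi(X_1,\dots,X_n)]=\mathbb E\big[\mathbb E[\phi(\boldsymbol x,X_n)]_{\boldsymbol x=(X_1,\dots,X_{n-1})}\big]$ for all $n$ and bounded Borel $\phi$. Code: $f_n:\mathcal X^n\to\mathcal W$, $g_n:\mathcal W\to\hat{\mathcal X}^n$, rate $\frac{\log\|\mathcal W\|}{n}$. Sequence distortion $d(\boldsymbol x^n,\hat{\boldsymbol x}^n)=\frac1n\sum_{i=1}^n d(x_i,\hat x_i)$. Rate distortion function: for a transition matrix $\boldsymbol Q=(q(\hat x|x))$ from $\mathcal X$ to $\hat{\mathcal X}$ put $\mathbb E_{\boldsymbol Q}[d(X,\hat X)]=\sup_\theta\sum_{x,\hat x}p_\theta(x)q(\hat x|x)d(x,\hat x)$ and $\overline I[\{p_\theta\};\boldsymbol Q]=\sup_\theta\sum_{x,\hat x}p_\theta(x)q(\hat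 x|x)\log\frac{q(\hat x|x)}{\sum_{x'}q(\hat x|x')p_\theta(x')}$; then $\hat R^I(D)=\inf\{\overline I[\{p_\theta\};\boldsymbol Q]:\mathbb E_{\boldsymbol Q}[d(X,\hat X)]\le D\}$. *)

(* Defs.v *)
From HB Require Import structures.
From mathcomp Require Import all_boot all_order all_algebra.
From mathcomp Require Import all_classical all_reals all_analysis.
Set Implicit Arguments. Unset Strict Implicit. Unset Printing Implicit Defensive.
Import Order.TTheory GRing.Theory Num.Theory.
Import numFieldNormedType.Exports.
Local Open Scope classical_set_scope.
Local Open Scope ring_scope.

Section SublinearSource.
Variables (R : realType) (dd : measure_display) (Omega : measurableType dd)
  (Theta : Type) (P : Theta -> probability Omega R).

Definition Eth (th : Theta) (f : Omega -> R) : \bar R := (\int[P th]_w (f w)%:E)%E.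
Definition sE (f : Omega -> R) : \bar R := ereal_sup [set Eth th f | th in [set: Theta]].
Definition lE (f : Omega -> R) : \bar R := ereal_inf [set Eth th f | th in [set: Theta]].

Variables (TX : finType) (X : nat -> Omega -> TX).

(* X^n = (X_0, ..., X_{n-1})  (0-indexed version of X_1..X_n) *)
Definition Xvec (n : nat) (w : Omega) : n.-tuple TX := [tuple X i w | i < n].

(* H = bounded Borel functions of finitely many X_i *)
Definition in_HX (Y : Omega -> R) :=
  exists m (psi : m.-tuple TX -> R), Y = (fun w => psi (Xvec m w)).

(* countably-dimensional weak compactness of {P_theta} (w.r.t. H) *)
Definition weakly_compact :=
  forall Y : nat -> Omega -> R, (forall k, in_HX (Y k)) ->
  forall s : nat -> Theta, exists (nk : nat -> nat) (th : Theta),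
    {homo nk : a b / (a < b)%N} /\
    forall (m : nat) (phi : 'rV[R]_m -> R),
      continuous phi -> (exists M : R, forall v, `|phi v| <= M) ->
      fine (Eth (s (nk k)) (fun w => phi (\row_(i < m) Y i w))) @[k --> \oo]
        --> fine (Eth th (fun w => phi (\row_(i < m) Y i w))).

Definition iid_seq :=
  (forall (i j : nat) (phi : TX -> R),
      sE (fun w => phi (X i w)) = sE (fun w => phi (X j w))) /\
  (forall (n : nat) (phi : n.-tuple TX -> TX -> R),
      sE (fun w => phi (Xvec n w) (X n w)) =
      sE (fun w => fine (sE (fun w' => phi (Xvec n w) (X n w'))))).

Variables (TXh : finType) (d : TX -> TXh -> R).

Definition pth (th : Theta) (x : TX) : R := fine (P th (X 0 @^-1` [set x])).

Definition is_transition (Q : TX -> TXh -> R) :=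
  (forall x y, 0 <= Q x y) /\ (forall x, \sum_y Q x y = 1).

Definition EQd (Q : TX -> TXh -> R) : \bar R :=
  ereal_sup [set (\sum_x \sum_y pth th x * Q x y * d x y)%:E | th in [set: Theta]].

Definition Ibar (Q : TX -> TXh -> R) : \bar R :=
  ereal_sup [set (\sum_x \sum_y pth th x * Q x y *
                   ln (Q x y / \sum_x' Q x' y * pth th x'))%:E | th in [set: Theta]].

Definition RI (D : R) : \bar R :=
  ereal_inf [set Ibar Q | Q in [set Q | is_transition Q /\ (EQd Q <= D%:E)%E]].

Definition dn (n : nat) (x : n.-tuple TX) (xh : n.-tuple TXh) : R :=
  n%:R^-1 * \sum_(i < n) d (tnth x i) (tnth xh i).

End SublinearSource.

(* Main.v *)
Require Import Defs.
From HB Require Import structures.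
From mathcomp Require Import all_boot all_order all_algebra.
From mathcomp Require Import all_classical all_reals all_analysis.
From mathcomp Require Import ring lra.
Import Order.TTheory GRing.Theory Num.Theory.
Local Open Scope ring_scope.
Set Implicit Arguments. Unset Strict Implicit. Unset Printing Implicit Defensive.

Section Prod.
Context (R : realType) (S : finType) (r : S -> R).

Lemma E_prod n (phi : 'I_n -> S -> R) :
  \sum_(z : {ffun 'I_n -> S}) (\prod_i r (z i)) * \prod_i phi i (z i)
  = \prod_i \sum_s r s * phi i s.
Proof.
rewrite bigA_distr_bigA; apply: eq_bigr => z _.
by rewrite -big_split.
Qed.

Lemma prod_pred1 n (i : 'I_n) (a : R) :
  \prod_(m < n) (if m == i then a else 1) = a.
Proof. by rewrite -big_mkcond big_pred1_eq. Qed.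

Lemma prod_if n (i : 'I_n) (g : S -> R) (z : {ffun 'I_n -> S}) :
  \prod_(m < n) (if m == i then g (z m) else 1) = g (z i).
Proof.
rewrite -big_mkcond /=.
by rewrite (big_pred1 i) // => m.
Qed.

Hypothesis r0 : forall s, 0 <= r s.
Hypothesis r1 : \sum_s r s = 1.

Lemma sum_prod1 n : \sum_(z : {ffun 'I_n -> S}) \prod_i r (z i) = 1.
Proof.
have H := @E_prod n (fun _ _ => 1).
transitivity (\sum_(z : {ffun 'I_n -> S}) (\prod_i r (z i)) * \prod_(i < n) (fun _ _ => (1:R)) i (z i)).
  apply: eq_bigr => z _; rewrite [X in _ = _ * X]big1 ?mulr1 //.
rewrite H; apply: big1 => i _.
by under eq_bigr do rewrite mulr1; rewrite r1.
Qed.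

Lemma prod_ge0 n (z : {ffun 'I_n -> S}) : 0 <= \prod_i r (z i).
Proof. by apply: prodr_ge0 => i _. Qed.

Lemma E_pair n (i j : 'I_n) (g1 g2 : S -> R) :
  \sum_(z : {ffun 'I_n -> S}) (\prod_m r (z m)) * (g1 (z i) * g2 (z j)) =
  if i == j then \sum_s r s * (g1 s * g2 s)
  else (\sum_s r s * g1 s) * (\sum_s r s * g2 s).
Proof.
transitivity (\prod_m \sum_s r s * 
  ((if m == i then g1 s else 1) * (if m == j then g2 s else 1))).
  rewrite -(@E_prod n (fun m s => (if m == i then g1 s else 1) * (if m == j then g2 s else 1))).
  by apply: eq_bigr => z _; rewrite big_split /= prod_if prod_if.
case: eqVneq => [<-|ij].
  rewrite -(prod_pred1 i (\sum_s r s * (g1 s * g2 s))).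
  apply: eq_bigr => m _; case: eqVneq => _ /=.
    by [].
  by under eq_bigr do rewrite !mulr1; rewrite r1.
rewrite -(prod_pred1 i (\sum_s r s * g1 s)) -(prod_pred1 j (\sum_s r s * g2 s)).
rewrite -big_split /=; apply: eq_bigr => m _.
case: (eqVneq m i) => [mi|mi]; case: (eqVneq m j) => [mj|mj] //=.
- by rewrite -mi mj eqxx in ij.
- by rewrite mulr1; apply: eq_bigr => s _; rewrite mulr1.
- by rewrite mul1r; apply: eq_bigr => s _; rewrite mul1r.
- by rewrite mulr1; under eq_bigr do rewrite !mulr1; rewrite r1.
Qed.

Variable Z : S -> R.
Let mu := \sum_s r s * Z s.
Let V := \sum_s r s * (Z s - mu) ^+ 2.

Lemma var_sum n :
  \sum_(z : {ffun 'I_n -> S}) (\prod_m r (z m)) * (\sum_i (Z (z i) - mu)) ^+ 2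
  = n%:R * V.
Proof.
have c0 : \sum_s r s * (Z s - mu) = 0.
  under eq_bigr do rewrite mulrBr.
  by rewrite sumrB -mulr_suml r1 mul1r subrr.
transitivity (\sum_(i < n) \sum_(j < n) \sum_(z : {ffun 'I_n -> S})
   (\prod_m r (z m)) * ((Z (z i) - mu) * (Z (z j) - mu))).
  transitivity (\sum_(z : {ffun 'I_n -> S}) \sum_(i < n) \sum_(j < n)
     (\prod_m r (z m)) * ((Z (z i) - mu) * (Z (z j) - mu))).
    apply: eq_bigr => z _; rewrite expr2 mulr_suml mulr_sumr; apply: eq_bigr => i _.
    by rewrite mulr_sumr mulr_sumr.
  rewrite exchange_big; apply: eq_bigr => i _ /=.
  by rewrite exchange_big.
rewrite (_ : n%:R * V = \sum_(i < n) V); last by rewrite sumr_const card_ord mulr_natl.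
apply: eq_bigr => i _.
under eq_bigr => j _ do rewrite (E_pair i j (fun s => Z s - mu) (fun s => Z s - mu)).
rewrite (bigD1 i) //= eqxx [X in _ + X]big1 ?addr0.
  by apply: eq_bigr => s _; rewrite expr2.
by move=> j /negPf; rewrite eq_sym => ->; rewrite c0 mul0r.
Qed.

Lemma cheb n (de : R) : (0 < n)%N -> 0 < de ->
  \sum_(z : {ffun 'I_n -> S}) (\prod_m r (z m)) *
      (if n%:R * de < `|\sum_i Z (z i) - n%:R * mu| then 1 else 0)
  <= V / (n%:R * de ^+ 2).
Proof.
move=> n0 de0.
have nde : 0 < n%:R * de by rewrite mulr_gt0 // ltr0n.
have -> : V / (n%:R * de ^+ 2) = (n%:R * V) / (n%:R * de) ^+ 2.
  have n0' : n%:R != 0 :> R by rewrite pnatr_eq0 -lt0n.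
  have d0' : de != 0 by rewrite gt_eqF.
  by field; rewrite n0' d0'.
rewrite -var_sum mulr_suml; apply: ler_sum => z _.
rewrite -mulrA; apply: ler_wpM2l; first exact: prod_ge0.
have -> : \sum_i (Z (z i) - mu) = \sum_i Z (z i) - n%:R * mu.
  by rewrite sumrB sumr_const card_ord mulr_natl.
case: ltrP => /= h; last by rewrite mulr_ge0 // ?sqr_ge0 // invr_ge0 sqr_ge0.
rewrite ler_pdivlMr ?exprn_gt0 // mul1r -real_normK ?num_real //.
rewrite -[X in _ <= X]real_normK ?num_real // !expr2 ger0_norm ?ltW //.
by apply: ltr_pM; rewrite ?ltW.
Qed.

End Prod.

Definition ind (R : realType) (b : bool) : R := if b then 1 else 0.

Lemma exists_le (R : realType) (I : finType) (i0 : I) (w F : I -> R) :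
  (forall i, 0 <= w i) -> \sum_i w i = 1 -> exists i, F i <= \sum_i w i * F i.
Proof.
move=> w0 w1; exists (Order.arg_min i0 xpredT F).
case: (Order.TotalTheory.arg_minP F (isT : xpredT i0)) => i _ H.
rewrite -[X in X <= _]mul1r -w1 mulr_suml; apply: ler_sum => j _.
by rewrite ler_wpM2l // H.
Qed.

Section Code.
Context (R : realType) (TX TXh : finType) (p : TX -> R) (Q : TX -> TXh -> R)
  (d : TX -> TXh -> R).
Hypotheses (p0 : forall x, 0 <= p x) (p1 : \sum_x p x = 1)
  (Q0 : forall x y, 0 <= Q x y) (Q1 : forall x, \sum_y Q x y = 1)
  (d0 : forall x y, 0 <= d x y).

Definition q y := \sum_x Q x y * p x.
Definition Lf x y := ln (Q x y / q y).
Definition Iv := \sum_x \sum_y p x * Q x y * Lf x y.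
Definition D0 := \sum_x \sum_y p x * Q x y * d x y.
Definition dmax := \sum_x \sum_y d x y.

Lemma q0 y : 0 <= q y.
Proof. by apply: sumr_ge0 => x _; rewrite mulr_ge0. Qed.

Lemma q1 : \sum_y q y = 1.
Proof.
rewrite /q exchange_big /= -p1; apply: eq_bigr => x _.
by rewrite -mulr_suml Q1 mul1r.
Qed.

Lemma q_ge y x : Q x y * p x <= q y.
Proof.
rewrite /q (bigD1 x) //= lerDl.
by apply: sumr_ge0 => x' _; rewrite mulr_ge0.
Qed.

Lemma d_le x y : d x y <= dmax.
Proof.
rewrite /dmax (bigD1 x) //= (bigD1 y) //= -addrA lerDl.
apply: addr_ge0; first by apply: sumr_ge0 => ? _.
by apply: sumr_ge0 => ? _; apply: sumr_ge0.
Qed.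

Lemma dmax_ge0 : 0 <= dmax.
Proof. by apply: sumr_ge0 => ? _; apply: sumr_ge0. Qed.

Lemma D0_ge0 : 0 <= D0.
Proof. by apply: sumr_ge0 => ? _; apply: sumr_ge0 => ? _; rewrite !mulr_ge0. Qed.

Lemma Iv_ge0 : 0 <= Iv.
Proof.
have key : forall x y, p x * Q x y - p x * q y <= p x * Q x y * Lf x y.
  move=> x y.
  have [pQ0|pQ0] := eqVneq (p x * Q x y) 0.
    by rewrite pQ0 mul0r sub0r oppr_le0 mulr_ge0 // q0.
  have px0 : 0 < p x by rewrite lt_def p0 andbT; apply: contraNneq pQ0 => ->; rewrite mul0r.
  have Qxy0 : 0 < Q x y by rewrite lt_def Q0 andbT; apply: contraNneq pQ0 => ->; rewrite mulr0.
  have qy0 : 0 < q y by apply: lt_le_trans (q_ge y x); rewrite mulr_gt0.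
  rewrite -mulrBr -mulrA ler_wpM2l ?p0 //.
  have h' : ln (q y / Q x y) <= q y / Q x y - 1.
    move: (@le_ln1Dx R (q y / Q x y - 1)); rewrite addrCA subrr addr0; apply.
    by have := divr_gt0 qy0 Qxy0; lra.
  have e : Lf x y = - ln (q y / Q x y).
    rewrite /Lf -lnV; last by rewrite posrE divr_gt0.
    by rewrite invf_div.
  have h2 : 1 - q y / Q x y <= Lf x y by rewrite e lerNr opprB.
  have := ler_wpM2l (ltW Qxy0) h2.
  by rewrite mulrBr mulr1 mulrCA mulfV ?mulr1 ?gt_eqF.
apply: le_trans (ler_sum _ (fun x _ => ler_sum _ (fun y _ => key x y))).
rewrite big1 // => x _.
by rewrite sumrB -!mulr_sumr Q1 q1 subrr.
Qed.


Section N.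
Variable n : nat.
Hypothesis n0 : (0 < n)%N.
Local Notation T := {ffun 'I_n -> TX}.
Local Notation Y := {ffun 'I_n -> TXh}.
Definition pn (x : T) := \prod_i p (x i).
Definition qn (y : Y) := \prod_i q (y i).
Definition Qn (x : T) (y : Y) := \prod_i Q (x i) (y i).
Definition dbar (x : T) (y : Y) := n%:R^-1 * \sum_i d (x i) (y i).

Lemma pn_ge0 x : 0 <= pn x. Proof. by apply: prodr_ge0 => i _. Qed.
Lemma qn_ge0 y : 0 <= qn y. Proof. by apply: prodr_ge0 => i _; apply: q0. Qed.
Lemma Qn_ge0 x y : 0 <= Qn x y. Proof. by apply: prodr_ge0 => i _. Qed.
Lemma pn1 : \sum_x pn x = 1. Proof. exact: sum_prod1. Qed.
Lemma qn1 : \sum_y qn y = 1. Proof. exact: (sum_prod1 q1). Qed.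
Lemma Qn1 x : \sum_y Qn x y = 1.
Proof.
transitivity (\prod_i \sum_j Q (x i) j); first by rewrite bigA_distr_bigA.
by apply: big1 => i _; apply: Q1.
Qed.

Lemma dbar_le x y : dbar x y <= dmax.
Proof.
have nR : 0 < n%:R :> R by rewrite ltr0n.
rewrite /dbar ler_pdivrMl // mulr_natl -[X in dmax *+ X]card_ord -sumr_const.
by apply: ler_sum => i _; apply: d_le.
Qed.

Lemma ind_ge0 b : 0 <= ind R b. Proof. by case: b; rewrite /ind. Qed.
Lemma ind_le1 b : ind R b <= 1. Proof. by case: b; rewrite /ind. Qed.
Lemma indN b : ind R (~~ b) = 1 - ind R b.
Proof. by case: b; rewrite /ind ?subrr ?subr0. Qed.

Variables (M : nat) (j0 : 'I_M) (thr : R).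
Hypothesis thr0 : 0 <= thr.
Local Notation CB := {ffun 'I_M -> Y}.

Definition enc (c : CB) (x : T) : 'I_M :=
  Order.arg_min j0 xpredT (fun j => dbar x (c j)).

Lemma enc_min (c : CB) x j : dbar x (c (enc c x)) <= dbar x (c j).
Proof.
rewrite /enc; case: (Order.TotalTheory.arg_minP (fun j => dbar x (c j)) (isT : xpredT j0)).
by move=> i _ H; apply: H.
Qed.

Lemma enc_bound (c : CB) x : dbar x (c (enc c x)) <=
  thr + dmax * \prod_j ind R (~~ (dbar x (c j) <= thr)).
Proof.
case: (boolP [exists j, dbar x (c j) <= thr]) => [/existsP [j hj]|hn].
  rewrite (bigD1 j) //= hj /ind /= mul0r mulr0 addr0.
  exact: le_trans (enc_min c x j) hj.
rewrite big1 ?mulr1.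
  by apply: le_trans (dbar_le _ _) _; rewrite lerDr.
move=> j _; move/existsPn: hn => /(_ j) /negPf ->; by [].
Qed.

Definition a x := \sum_y qn y * ind R (dbar x y <= thr).

Lemma avg_fail x : \sum_(c : CB) (\prod_j qn (c j)) * \prod_j ind R (~~ (dbar x (c j) <= thr))
  = (1 - a x) ^+ M.
Proof.
rewrite (@E_prod R Y qn M (fun _ y => ind R (~~ (dbar x y <= thr)))).
rewrite prodr_const card_ord; congr (_ ^+ _).
under eq_bigr do rewrite indN mulrBr mulr1.
by rewrite sumrB qn1.
Qed.

Lemma W_ge0 (c : CB) : 0 <= \prod_j qn (c j).
Proof. by apply: prodr_ge0 => j _; apply: qn_ge0. Qed.

Lemma W1 : \sum_(c : CB) \prod_j qn (c j) = 1.
Proof. exact: (sum_prod1 qn1). Qed.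

Lemma avg_total :
  \sum_(c : CB) (\prod_j qn (c j)) * \sum_x pn x * dbar x (c (enc c x))
  <= thr + dmax * \sum_x pn x * (1 - a x) ^+ M.
Proof.
apply: le_trans (_ : \sum_(c : CB) (\prod_j qn (c j)) * \sum_x pn x *
   (thr + dmax * \prod_j ind R (~~ (dbar x (c j) <= thr))) <= _).
  apply: ler_sum => c _; apply: ler_wpM2l; first exact: W_ge0.
  apply: ler_sum => x _; apply: ler_wpM2l; first exact: pn_ge0.
  exact: enc_bound.
rewrite le_eqVlt; apply/orP; left; apply/eqP.
under eq_bigr do rewrite mulr_sumr.
rewrite exchange_big /=.
under eq_bigr => x _ do (under eq_bigr do rewrite mulrCA mulrDr mulrDr mulrCA [_ * (dmax * _)]mulrCA).
transitivity (\sum_x pn x * (thr + dmax * (1 - a x) ^+ M)).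
  apply: eq_bigr => x _.
  rewrite big_split /= mulrDr; congr (_ + _).
    rewrite -mulr_suml W1; ring.
  by rewrite -!mulr_sumr avg_fail.
have -> : \sum_x pn x * (thr + dmax * (1 - a x) ^+ M) =
   \sum_x (pn x * thr + dmax * (pn x * (1 - a x) ^+ M)).
  by apply: eq_bigr => x _; ring.
by rewrite big_split /= -mulr_suml pn1 mul1r -mulr_sumr.
Qed.


Lemma a_le1 x : a x <= 1.
Proof.
rewrite -qn1; apply: ler_sum => y _.
by rewrite -[X in _ <= X]mulr1 ler_wpM2l ?qn_ge0 ?ind_le1.
Qed.

Lemma a_ge0 x : 0 <= a x.
Proof. by apply: sumr_ge0 => y _; rewrite mulr_ge0 ?qn_ge0 ?ind_ge0. Qed.

Variable cI : R.
Definition Bev x y := (dbar x y <= thr) && (\sum_i Lf (x i) (y i) <= cI).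
Definition b x := \sum_y Qn x y * ind R (Bev x y).

Lemma b_le1 x : b x <= 1.
Proof.
rewrite -(Qn1 x); apply: ler_sum => y _.
by rewrite -[X in _ <= X]mulr1 ler_wpM2l ?Qn_ge0 ?ind_le1.
Qed.

Lemma b_ge0 x : 0 <= b x.
Proof. by apply: sumr_ge0 => y _; rewrite mulr_ge0 ?Qn_ge0 ?ind_ge0. Qed.

Lemma Qn_le (x : T) (y : Y) : 0 < pn x -> \sum_i Lf (x i) (y i) <= cI ->
  expR (- cI) * Qn x y <= qn y.
Proof.
move=> px hL.
have [Q0'|Qn0] := eqVneq (Qn x y) 0; first by rewrite Q0' mulr0 qn_ge0.
have hQ : forall i, 0 < Q (x i) (y i).
  move=> i; rewrite lt_def Q0 andbT.
  by move/prodf_neq0: Qn0 => /(_ i isT).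
have hp : forall i, 0 < p (x i).
  move=> i; rewrite lt_def p0 andbT.
  by move: (gt_eqF px); rewrite /pn => /negbT /prodf_neq0 /(_ i isT).
have hq : forall i, 0 < q (y i).
  by move=> i; apply: lt_le_trans (q_ge _ _); rewrite mulr_gt0.
have e : Qn x y = qn y * expR (\sum_i Lf (x i) (y i)).
  rewrite expR_sum /qn -big_split /=; apply: eq_bigr => i _.
  rewrite /Lf lnK; last by rewrite posrE divr_gt0.
  by rewrite mulrCA mulfV ?mulr1 // gt_eqF.
rewrite e mulrCA -[X in _ <= X]mulr1 ler_wpM2l ?qn_ge0 //.
by rewrite -expRD expR_le1 addrC subr_le0.
Qed.

Lemma a_ge x : 0 < pn x -> expR (- cI) * b x <= a x.
Proof.
move=> px; rewrite /b mulr_sumr; apply: ler_sum => y _.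
rewrite /Bev; case: (boolP (dbar x y <= thr)) => h1; case: (boolP (\sum_i Lf (x i) (y i) <= cI)) => h2;
  rewrite /ind /= ?mulr0 ?mulr1 ?mulr_ge0 ?qn_ge0 ?ind_ge0 //.
exact: Qn_le.
Qed.

Lemma exp_split (K bb : R) : 0 <= K -> 0 <= bb -> bb <= 1 ->
  expR (- (K * bb)) <= 2 * (1 - bb) + expR (- (K / 2)).
Proof.
move=> K0 b0 b1.
case: (leP (1/2) bb) => hb.
  apply: (@le_trans _ _ (expR (- (K / 2)))).
    rewrite ler_expR lerN2 -(mul1r K) mulrAC mul1r.
    by rewrite [X in X <= _]mulrC ler_wpM2l.
  by rewrite lerDr mulr_ge0 // subr_ge0.
apply: (@le_trans _ _ 1).
  by rewrite expR_le1 oppr_le0 mulr_ge0.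
have : 0 <= expR (- (K / 2)) by apply: expR_ge0.
lra.
Qed.



Definition K := M%:R * expR (- cI).

Lemma pt_bound x : pn x * (1 - a x) ^+ M <= pn x * (2 * (1 - b x) + expR (- (K / 2))).
Proof.
have [px0|px0] := eqVneq (pn x) 0; first by rewrite px0 !mul0r.
have px : 0 < pn x by rewrite lt_def px0 pn_ge0.
apply: ler_wpM2l; first exact: pn_ge0.
have ha1 := a_le1 x; have ha0 := a_ge0 x.
apply: (@le_trans _ _ (expR (- a x) ^+ M)).
  apply: lerXn2r; rewrite ?nnegrE ?subr_ge0 ?expR_ge0 //.
  by have := expR_ge1Dx (- a x).
rewrite -expRM_natr.
apply: le_trans (exp_split _ (b_ge0 x) (b_le1 x)); last first.
  by rewrite /K mulr_ge0 ?expR_ge0.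
rewrite ler_expR mulNr lerN2 /K -mulrA mulrC ler_wpM2r //.
have h := a_ge px. lra.
Qed.


Definition rj (s : TX * TXh) := p s.1 * Q s.1 s.2.
Lemma rj_ge0 s : 0 <= rj s. Proof. by rewrite mulr_ge0. Qed.
Lemma rj1 : \sum_s rj s = 1.
Proof.
rewrite /rj -(pair_bigA _ (fun x y => p x * Q x y)) /= -p1.
by apply: eq_bigr => x _; rewrite -mulr_sumr Q1 mulr1.
Qed.

Definition z1 (z : {ffun 'I_n -> TX * TXh}) : T := [ffun i => (z i).1].
Definition z2 (z : {ffun 'I_n -> TX * TXh}) : Y := [ffun i => (z i).2].

Lemma joint (G : T -> Y -> R) :
  \sum_x \sum_y pn x * Qn x y * G x y =
  \sum_(z : {ffun 'I_n -> TX * TXh}) (\prod_i rj (z i)) * G (z1 z) (z2 z).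
Proof.
rewrite (pair_bigA _ (fun x y => pn x * Qn x y * G x y)) /=.
pose h := fun z => (z1 z, z2 z).
pose g := fun u : T * Y => [ffun i => (u.1 i, u.2 i)] : {ffun 'I_n -> TX * TXh}.
have hb : bijective h.
  exists g.
    move=> z; apply/ffunP => i; rewrite /g /h /z1 /z2 /= !ffunE.
    by case: (z i).
  by case=> x y; rewrite /g /h /z1 /z2 /=; congr pair; apply/ffunP => i; rewrite !ffunE.
rewrite (reindex h (onW_bij _ hb)) /=; apply: eq_bigr => z _.
congr (_ * _); rewrite /pn /Qn -big_split /=; apply: eq_bigr => i _.
by rewrite /z1 /z2 !ffunE.
Qed.

Variable de : R.
Hypothesis de0 : 0 < de.
Hypothesis thrE : thr = D0 + de.
Hypothesis cIE : cI = n%:R * (Iv + de).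

Let Z1 (s : TX * TXh) := d s.1 s.2.
Let Z2 (s : TX * TXh) := Lf s.1 s.2.

Lemma mu1 : \sum_s rj s * Z1 s = D0.
Proof. by rewrite /rj /Z1 -(pair_bigA _ (fun x y => p x * Q x y * d x y)). Qed.
Lemma mu2 : \sum_s rj s * Z2 s = Iv.
Proof. by rewrite /rj /Z2 -(pair_bigA _ (fun x y => p x * Q x y * Lf x y)). Qed.

Lemma fail_le : \sum_x pn x * (1 - b x) <=
  (\sum_s rj s * (Z1 s - \sum_s rj s * Z1 s) ^+ 2) / (n%:R * de ^+ 2) +
  (\sum_s rj s * (Z2 s - \sum_s rj s * Z2 s) ^+ 2) / (n%:R * de ^+ 2).
Proof.
have nR : 0 < n%:R :> R by rewrite ltr0n.
pose E (Z : TX * TXh -> R) mu (z : {ffun 'I_n -> TX * TXh}) :=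
  if n%:R * de < `|\sum_i Z (z i) - n%:R * mu| then 1 else (0:R).
have step : \sum_x pn x * (1 - b x) =
    \sum_x \sum_y pn x * Qn x y * ind R (~~ Bev x y).
  apply: eq_bigr => x _.
  rewrite /b -(Qn1 x) -sumrB mulr_sumr; apply: eq_bigr => y _.
  by rewrite indN; ring.
rewrite step.
apply: (@le_trans _ _ (\sum_x \sum_y pn x * Qn x y *
   (E Z1 (\sum_s rj s * Z1 s) [ffun i => (x i, y i)] +
    E Z2 (\sum_s rj s * Z2 s) [ffun i => (x i, y i)]))).
  apply: ler_sum => x _; apply: ler_sum => y _.
  apply: ler_wpM2l; first by rewrite mulr_ge0 ?pn_ge0 ?Qn_ge0.
  have hf : forall (Z : TX * TXh -> R),
      \sum_i Z ([ffun i0 => (x i0, y i0)] i) = \sum_i Z (x i, y i).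
    by move=> Z; apply: eq_bigr => i _; rewrite ffunE.
  rewrite /Bev /E !hf mu1 mu2 /Z1 /Z2 /=.
  case: (boolP (dbar x y <= thr)) => h1 /=.
    case: (boolP (\sum_i Lf (x i) (y i) <= cI)) => h2 /=.
      by rewrite /ind /= addr_ge0 //; case: ifP.
    rewrite /ind /=.
    have -> : n%:R * de < `|\sum_i Lf (x i) (y i) - n%:R * Iv|.
      apply: lt_le_trans (ler_norm _).
      move: h2; rewrite -ltNge cIE mulrDr; lra.
    by rewrite lerDr; case: ifP.
  rewrite /ind /=.
  have -> : n%:R * de < `|\sum_i d (x i) (y i) - n%:R * D0|.
    apply: lt_le_trans (ler_norm _).
    move: h1; rewrite -ltNge /dbar ltr_pdivlMl // thrE mulrDr; lra.
  by rewrite lerDl; case: ifP.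
have zK : forall z : {ffun 'I_n -> TX * TXh}, [ffun i => ((z1 z) i, (z2 z) i)] = z.
  by move=> z; apply/ffunP => i; rewrite /z1 /z2 !ffunE; case: (z i).
rewrite (_ : \sum_x \sum_y _ = 
  \sum_x \sum_y pn x * Qn x y * E Z1 (\sum_s rj s * Z1 s) [ffun i => (x i, y i)] +
  \sum_x \sum_y pn x * Qn x y * E Z2 (\sum_s rj s * Z2 s) [ffun i => (x i, y i)]); last first.
  rewrite -big_split; apply: eq_bigr => x _; rewrite -big_split; apply: eq_bigr => y _.
  by rewrite mulrDr.
rewrite (joint (fun x y => E Z1 (\sum_s rj s * Z1 s) [ffun i => (x i, y i)])).
rewrite (joint (fun x y => E Z2 (\sum_s rj s * Z2 s) [ffun i => (x i, y i)])).
rewrite /=; under eq_bigr do rewrite zK; under [X in _ + X]eq_bigr do rewrite zK.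
by apply: lerD; apply: cheb => //; [exact: rj_ge0 | exact: rj1 | exact: rj_ge0 | exact: rj1].
Qed.


Lemma avg_final :
  \sum_(c : CB) (\prod_j qn (c j)) * \sum_x pn x * dbar x (c (enc c x))
  <= thr + dmax * (2 * ((\sum_s rj s * (Z1 s - \sum_s rj s * Z1 s) ^+ 2) / (n%:R * de ^+ 2) +
  (\sum_s rj s * (Z2 s - \sum_s rj s * Z2 s) ^+ 2) / (n%:R * de ^+ 2)) + expR (- (K / 2))).
Proof.
apply: le_trans avg_total _.
rewrite lerD2l; apply: ler_wpM2l; first exact: dmax_ge0.
apply: le_trans (ler_sum _ (fun x _ => pt_bound x)) _.
have -> : \sum_x pn x * (2 * (1 - b x) + expR (- (K / 2))) =
   2 * \sum_x pn x * (1 - b x) + expR (- (K / 2)) * \sum_x pn x.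
  rewrite mulr_sumr mulr_sumr -big_split /=; apply: eq_bigr => x _; ring.
rewrite pn1 mulr1 lerD2r ler_wpM2l //; exact: fail_le.
Qed.

End N.


Theorem coding (Rs eps : R) (t0 : TXh) : Iv < Rs -> 0 < eps ->
  exists n M (c : {ffun 'I_M -> {ffun 'I_n -> TXh}}) (e : {ffun 'I_n -> TX} -> 'I_M),
   [/\ (0 < n)%N, ln (M%:R) / n%:R <= Rs &
   \sum_x pn x * dbar x (c (e x)) <= D0 + eps].
Proof.
move=> IRs eps0.
have I0 := Iv_ge0.
set g := Rs - Iv.
have g0 : 0 < g by rewrite subr_gt0.
set de := Num.min (eps / 2) (g / 2).
have de0 : 0 < de by rewrite lt_min !divr_gt0.
have de1 : de <= eps / 2 by rewrite ge_min lexx.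
have de2 : de <= g / 2 by rewrite ge_min lexx orbT.
set ga := Rs - Iv - de.
have ga0 : g / 2 <= ga by rewrite /ga -/g; lra.
have gap : 0 < ga by apply: lt_le_trans ga0; rewrite divr_gt0.
set V1 := \sum_s rj s * (d s.1 s.2 - \sum_s0 rj s0 * d s0.1 s0.2) ^+ 2.
set V2 := \sum_s rj s * (Lf s.1 s.2 - \sum_s0 rj s0 * Lf s0.1 s0.2) ^+ 2.
have V10 : 0 <= V1 by apply: sumr_ge0 => s _; rewrite mulr_ge0 ?rj_ge0 ?sqr_ge0.
have V20 : 0 <= V2 by apply: sumr_ge0 => s _; rewrite mulr_ge0 ?rj_ge0 ?sqr_ge0.
have dm0 := dmax_ge0.
set Cst := dmax * (2 * (V1 + V2) / de ^+ 2 + 2 / ga).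
have Cst0 : 0 <= Cst.
  have h1 : 0 <= 2 * (V1 + V2) / de ^+ 2.
    apply: divr_ge0; last exact: sqr_ge0.
    by apply: mulr_ge0; [|apply: addr_ge0].
  have h2 : 0 <= 2 / ga by rewrite divr_ge0 ?ltW.
  by rewrite /Cst mulr_ge0 // addr_ge0.
set n := (Num.trunc (Cst / de)).+1.
have n0 : (0 < n)%N by [].
have nR : 0 < n%:R :> R by rewrite ltr0n.
have nC : Cst / de < n%:R.
  by rewrite /n; have /andP[_ ->] := trunc_itv (divr_ge0 Cst0 (ltW de0)).
have Rs0 : 0 <= Rs by lra.
set M := Num.trunc (expR (n%:R * Rs)).
have hE1 : 1 <= expR (n%:R * Rs) by rewrite -expR0 ler_expR mulr_ge0 // ltW.
have M0 : (0 < M)%N by rewrite /M truncn_gt0.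
have hM := trunc_itv (expR_ge0 (n%:R * Rs)).
move/andP: hM => [hM1 hM2].
pose j0 := Ordinal M0.
pose thr := D0 + de.
have thr0 : 0 <= thr by rewrite /thr addr_ge0 ?D0_ge0 ?ltW.
pose cI := n%:R * (Iv + de).
have := @avg_final n n0 M j0 thr thr0 cI de de0 erefl erefl.
rewrite -/V1 -/V2.
have [c hc] := @exists_le R _ [ffun _ => [ffun _ => t0]] (fun c : {ffun 'I_M -> {ffun 'I_n -> TXh}} => \prod_j qn (c j))
  (fun c => \sum_x pn x * dbar x (c (enc j0 c x))) (@W_ge0 n M) (@W1 n M).
move=> hav.
exists n, M, c, (enc j0 c); split => //.
  have Mpos : 0 < M%:R :> R by rewrite ltr0n.
  rewrite ler_pdivrMr // mulrC.
  have := @ler_ln R M%:R (expR (n%:R * Rs)); rewrite !posrE expR_gt0 Mpos expRK.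
  by move=> H; rewrite H // hM1.
apply: le_trans hc _; apply: le_trans hav _.
set K0 := K M cI.
have KK : n%:R * ga <= K0.
  rewrite /K0 /K /cI.
  have h1 : expR (n%:R * Rs) - 1 <= M%:R by lra.
  have h2 := ler_wpM2r (expR_ge0 (- (n%:R * (Iv + de)))) h1.
  apply: le_trans h2.
  rewrite mulrBl mul1r -expRD.
  have h3 : expR (- (n%:R * (Iv + de))) <= 1.
    by rewrite expR_le1 oppr_le0 mulr_ge0 ?ltW //; lra.
  have h4 : 1 + n%:R * ga <= expR (n%:R * Rs + - (n%:R * (Iv + de))).
    have -> : n%:R * Rs + - (n%:R * (Iv + de)) = n%:R * ga by rewrite /ga; ring.
    exact: expR_ge1Dx.
  lra.
have Kp : 0 < K0 by apply: lt_le_trans KK; rewrite mulr_gt0.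
have hexp : expR (- (K0 / 2)) <= 2 / (n%:R * ga).
  rewrite expRN.
  have h5 : 1 + K0 / 2 <= expR (K0 / 2) by apply: expR_ge1Dx.
  have h6 : 0 < 1 + K0 / 2 by lra.
  apply: le_trans (_ : (1 + K0 / 2)^-1 <= _).
    by rewrite lef_pV2 ?posrE ?expR_gt0.
  rewrite -[X in X <= _]div1r ler_pdivrMr // mulrC mulrA.
  rewrite ler_pdivlMr ?mulr_gt0 //.
  have : n%:R * ga <= K0 := KK.
  have : 0 < n%:R * ga by rewrite mulr_gt0.
  lra.
have key : dmax * (2 * (V1 / (n%:R * de ^+ 2) + V2 / (n%:R * de ^+ 2)) + 2 / (n%:R * ga))
   = Cst / n%:R.
  rewrite /Cst; field.
  by rewrite !gt_eqF ?mulr_gt0 ?exprn_gt0.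
have hC : Cst / n%:R < de.
  by rewrite ltr_pdivrMr // mulrC -ltr_pdivrMr.
rewrite /thr.
apply: (@le_trans _ _ (D0 + de + Cst / n%:R)).
  rewrite -key lerD2l; apply: ler_wpM2l => //.
  by rewrite lerD2l.
lra.
Qed.
End Code.

Local Open Scope classical_set_scope.
Local Open Scope ring_scope.

Section Meas.
Context (R : realType) (dd : measure_display) (Omega : measurableType dd)
  (mu : probability Omega R) (T : finType) (V : Omega -> T)
  (mV : forall t, measurable (V @^-1` [set t])).

Lemma int_fin (psi : T -> R) : (\int[mu]_w (psi (V w))%:E =
   (\sum_t psi t * fine (mu (V @^-1` [set t])))%:E)%E.
Proof.
have -> : (fun w => (psi (V w))%:E) =
   (fun w => \sum_t ((psi t)%:E * (\1_(V @^-1` [set t]) w)%:E))%E.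
  apply/funext => w; rewrite (bigD1 (V w)) //= big1.
    by rewrite indicE mem_set //= mule1 adde0.
  move=> t /negPf tV; rewrite indicE memNset ?mule0 //=.
  by move=> /= E; rewrite E eqxx in tV.
rewrite integral_sum //; last first.
  by move=> t; apply: integrableZl => //; apply: integrable_indic.
rewrite -sumEFin; apply: eq_bigr => t _.
rewrite integralZl //; last by apply: integrable_indic.
rewrite integral_indic // setIT EFinM fineK //.
by rewrite fin_num_measure.
Qed.


Lemma fib_ge0 t : 0 <= fine (mu (V @^-1` [set t])).
Proof. by apply: fine_ge0; apply: measure_ge0. Qed.

Lemma sum_fib : \sum_t fine (mu (V @^-1` [set t])) = 1.
Proof.
have := int_fin (fun _ => 1).
under eq_bigr do rewrite mul1r.
move=> H; apply/eqP; rewrite -(@eqe R) -H.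
rewrite (_ : (fun w => (1:R)%:E) = cst 1%E) //.
by rewrite (@integral_cst _ _ _ mu setT measurableT 1%E) mul1e; apply/eqP; apply: probability_setT.
Qed.

Lemma int_le (psi : T -> R) (B : R) : (forall t, psi t <= B) ->
  (\int[mu]_w (psi (V w))%:E <= B%:E)%E.
Proof.
move=> hB; rewrite int_fin lee_fin.
rewrite -[X in _ <= X]mulr1 -sum_fib mulr_sumr.
by apply: ler_sum => t _; rewrite ler_wpM2r ?fib_ge0.
Qed.

Lemma int_mono (psi phi : T -> R) : (forall t, psi t <= phi t) ->
  (\int[mu]_w (psi (V w))%:E <= \int[mu]_w (phi (V w))%:E)%E.
Proof.
move=> h; rewrite !int_fin lee_fin.
by apply: ler_sum => t _; rewrite ler_wpM2r ?fib_ge0.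
Qed.

End Meas.

Section Sub.
Context (R : realType) (dd : measure_display) (Omega : measurableType dd)
  (Theta : Type) (P : Theta -> probability Omega R)
  (TX : finType) (X : nat -> Omega -> TX).
Hypothesis mX : forall (i : nat) (x : TX), measurable (X i @^-1` [set x]).

Definition xf n (w : Omega) : {ffun 'I_n -> TX} := [ffun i : 'I_n => X i w].

Lemma mes_all n (s : seq 'I_n) (g : {ffun 'I_n -> TX}) :
  measurable [set w | forall i, i \in s -> X i w = g i].
Proof.
elim: s => [|i s IH].
  rewrite (_ : [set w | _] = setT); first exact: measurableT.
  by apply/seteqP; split => w //= _ i; rewrite in_nil.
rewrite (_ : [set w | _] = X i @^-1` [set g i] `&` [set w | forall j, j \in s -> X j w = g j]).
  exact: measurableI.
apply/seteqP; split => w /=.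
  move=> H; split; first by apply: H; rewrite mem_head.
  by move=> j js; apply: H; rewrite in_cons js orbT.
move=> [h1 h2] j; rewrite in_cons => /orP [/eqP ->|js] //.
exact: h2.
Qed.

Lemma mxf n (g : {ffun 'I_n -> TX}) : measurable (xf n @^-1` [set g]).
Proof.
rewrite (_ : _ @^-1` _ = [set w | forall i, i \in enum 'I_n -> X i w = g i]).
  exact: mes_all.
apply/seteqP; split => w /=.
  by move=> <- i _; rewrite /xf ffunE.
by move=> H; apply/ffunP => i; rewrite /xf ffunE; apply: H; rewrite mem_enum.
Qed.


Lemma Eth_xf th n (F : {ffun 'I_n -> TX} -> R) :
  Eth P th (fun w => F (xf n w)) =
  (\sum_g F g * fine (P th (xf n @^-1` [set g])))%:E.
Proof. exact: (int_fin (P th) (@mxf n) F). Qed.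

Lemma sE_ge th n (F : {ffun 'I_n -> TX} -> R) :
  (Eth P th (fun w => F (xf n w)) <= sE P (fun w => F (xf n w)))%E.
Proof. by apply: ereal_sup_ubound; exists th. Qed.

Lemma sE_ub n (F : {ffun 'I_n -> TX} -> R) (B : R) : (forall g, F g <= B) ->
  (sE P (fun w => F (xf n w)) <= B%:E)%E.
Proof.
move=> hB; apply: ge_ereal_sup => _ [th _ <-].
exact: (int_le (P th) (@mxf n) hB).
Qed.

Lemma sE_mono n (F G : {ffun 'I_n -> TX} -> R) : (forall g, F g <= G g) ->
  (sE P (fun w => F (xf n w)) <= sE P (fun w => G (xf n w)))%E.
Proof.
move=> h; apply: ge_ereal_sup => _ [th _ <-].
apply: le_trans (sE_ge th G).
exact: (int_mono (P th) (@mxf n) h).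
Qed.

Variable th0 : Theta.
Hypothesis iid : iid_seq P X.
Let p := pth P X th0.

Lemma single (psi : TX -> R) i : ((\sum_y psi y * p y)%:E <= sE P (fun w => psi (X i w)))%E.
Proof.
rewrite (iid.1 i 0 psi) (_ : (\sum_y psi y * p y)%:E = Eth P th0 (fun w => psi (X 0 w))).
  by apply: ereal_sup_ubound; exists th0.
by rewrite /Eth (int_fin (P th0) (mX 0) psi).
Qed.

Lemma single_ub (psi : TX -> R) i (B : R) : (forall y, psi y <= B) ->
  (sE P (fun w => psi (X i w)) <= B%:E)%E.
Proof.
move=> hB; apply: ge_ereal_sup => _ [th _ <-].
exact: (int_le (P th) (mX i) hB).
Qed.

Lemma single_fine (psi : TX -> R) i :
  \sum_y psi y * p y <= fine (sE P (fun w => psi (X i w))).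
Proof.
have h1 := single psi i.
have h2' : (sE P (fun w => psi (X i w)) <= (\sum_y `|psi y|)%:E)%E.
  apply: single_ub => y.
  rewrite (bigD1 y) //= (le_trans (ler_norm _)) // lerDl.
  by apply: sumr_ge0 => ? _.
have hf : sE P (fun w => psi (X i w)) \is a fin_num.
  by rewrite fin_numElt (lt_le_trans _ h1) ?ltNyr // (le_lt_trans h2') ?ltry.
by rewrite -lee_fin fineK.
Qed.


Definition ext n (g : {ffun 'I_n -> TX}) (y : TX) : {ffun 'I_n.+1 -> TX} :=
  [ffun i => if unlift ord_max i is Some j then g j else y].

Lemma ext_max n g y : @ext n g y ord_max = y.
Proof. by rewrite /ext ffunE unlift_none. Qed.

Lemma ext_lift n g y (j : 'I_n) : @ext n g y (lift ord_max j) = g j.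
Proof. by rewrite /ext ffunE liftK. Qed.

Lemma sum_ext n (G : {ffun 'I_n.+1 -> TX} -> R) :
  \sum_f G f = \sum_g \sum_y G (@ext n g y).
Proof.
rewrite (pair_bigA _ (fun g y => G (@ext n g y))) /=.
pose h := fun u : {ffun 'I_n -> TX} * TX => ext u.1 u.2.
pose k := fun f : {ffun 'I_n.+1 -> TX} => ([ffun j => f (lift ord_max j)], f ord_max).
have hb : bijective h.
  exists k.
    case=> g y; rewrite /h /k /=; rewrite ext_max; congr pair.
    by apply/ffunP => j; rewrite ffunE ext_lift.
  move=> f; apply/ffunP => i; rewrite /h /k /ext ffunE /=.
  by case: unliftP => [j ->|->]; rewrite ?ffunE.
by rewrite (reindex h (onW_bij _ hb)).
Qed.

Lemma pn_ext n g y : pn p (@ext n g y) = pn p g * p y.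
Proof.
rewrite /pn big_ord_recr /= ext_max; congr (_ * _).
apply: eq_bigr => i _.
have -> : widen_ord (leqnSn n) i = lift ord_max i by apply/val_inj; rewrite /= /bump leqNgt ltn_ord.
by rewrite ext_lift.
Qed.

Lemma xf_ext n w : xf n.+1 w = ext (xf n w) (X n w).
Proof.
apply/ffunP => i; rewrite /ext /xf !ffunE.
by case: unliftP => [j ->|->]; rewrite ?ffunE //= /bump leqNgt ltn_ord.
Qed.

Lemma Xvec_xf n w : [ffun i => tnth (Xvec X n w) i] = xf n w.
Proof. by apply/ffunP => i; rewrite /xf !ffunE tnth_mktuple. Qed.

Lemma sE_prod n (F : {ffun 'I_n -> TX} -> R) :
  ((\sum_g pn p g * F g)%:E <= sE P (fun w => F (xf n w)))%E.
Proof.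
elim: n F => [|n IH] F.
  apply: le_trans (sE_ge th0 F).
  rewrite Eth_xf lee_fin le_eqVlt; apply/orP; left; apply/eqP.
  apply: eq_bigr => g _.
  have -> : xf 0 @^-1` [set g] = setT.
    by apply/seteqP; split => w //= _; apply/ffunP => -[].
  by rewrite /pn big_ord0 mul1r probability_setT mulr1.
pose G := fun g : {ffun 'I_n -> TX} => \sum_y p y * F (ext g y).
have e1 : (\sum_g pn p g * F g) = \sum_g pn p g * G g.
  rewrite sum_ext; apply: eq_bigr => g _.
  rewrite /G mulr_sumr; apply: eq_bigr => y _.
  by rewrite pn_ext mulrA.
rewrite e1; apply: le_trans (IH G) _.
pose phi := fun (t : n.-tuple TX) (y : TX) => F (ext [ffun i => tnth t i] y).
have e2 : (fun w => F (xf n.+1 w)) = (fun w => phi (Xvec X n w) (X n w)).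
  by apply/funext => w; rewrite /phi Xvec_xf xf_ext.
rewrite e2 iid.2.
pose H := fun g : {ffun 'I_n -> TX} => fine (sE P (fun w' => F (ext g (X n w')))).
have e3 : (fun w => fine (sE P (fun w' => phi (Xvec X n w) (X n w')))) =
          (fun w => H (xf n w)).
  by apply/funext => w; rewrite /phi /H Xvec_xf.
rewrite e3; apply: sE_mono => g.
rewrite /G /H.
apply: le_trans (single_fine (fun y => F (ext g y)) n).
rewrite le_eqVlt; apply/orP; left; apply/eqP; apply: eq_bigr => y _; by rewrite mulrC.
Qed.

Lemma lE_le n (h : {ffun 'I_n -> TX} -> R) :
  (lE P (fun w => h (xf n w)) <= (\sum_g pn p g * h g)%:E)%E.
Proof.
rewrite /lE ereal_infEN.
have -> : [set - x | x in [set Eth P th (fun w => h (xf n w)) | th in [set: Theta]]]%E =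
          [set Eth P th (fun w => - h (xf n w)) | th in [set: Theta]].
  apply/seteqP; split => z /=.
    move=> [x [th _ <-] <-]; exists th => //.
    rewrite (Eth_xf th (fun g => - h g)) (Eth_xf th h) -EFinN -sumrN; congr (_%:E); apply: eq_bigr => g _.
    by rewrite mulNr.
  move=> [th _ <-]; exists (Eth P th (fun w => h (xf n w))); first by exists th.
  rewrite (Eth_xf th (fun g => - h g)) (Eth_xf th h) -EFinN -sumrN; congr (_%:E); apply: eq_bigr => g _.
  by rewrite mulNr.
rewrite leeNl -EFinN.
apply: le_trans (sE_prod (fun g => - h g)).
rewrite lee_fin -sumrN le_eqVlt; apply/orP; left; apply/eqP.
by apply: eq_bigr => g _; rewrite mulrN.
Qed.
End Sub.

Unset Implicit Arguments.

Theorem theorem14 (R : realType) (dd : measure_display) (Omega : measurableType dd)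
  (Theta : Type) (P : Theta -> probability Omega R)
  (TX TXh : finType) (X : nat -> Omega -> TX) (d : TX -> TXh -> R) :
  (exists th : Theta, True) ->
  (forall (i : nat) (x : TX), measurable (X i @^-1` [set x])) ->
  weakly_compact P X ->
  iid_seq P X ->
  (forall x y, 0 <= d x y) ->
  forall D Rs eps : R, (RI P X d D < Rs%:E)%E -> 0 < eps ->
  exists (n M : nat) (f : n.-tuple TX -> 'I_M) (g : 'I_M -> n.-tuple TXh),
    [/\ (0 < n)%N, ln (M%:R) / n%:R <= Rs &
      (lE P (fun w => dn d (Xvec X n w) (g (f (Xvec X n w)))) <= (D + eps)%:E)%E].
Proof.
move=> [th0 _] mX _ iid d0 D Rs eps hRI eps0.
have [_ [Q [[Q0 Q1] QD] <-] hI] := ereal_inf_lt hRI.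
pose p := pth P X th0.
have p0 : forall x, 0 <= p x.
  by move=> x; rewrite /p /pth; apply: (fib_ge0 (P th0) (X 0)).
have p1 : \sum_x p x = 1 by rewrite /p /pth; apply: (sum_fib (P th0) (mX 0)).
have [w _] : exists w : Omega, True.
  case: (pselect (exists w : Omega, True)) => // hn; exfalso.
  have e : [set: Omega] = set0.
    by apply/seteqP; split => w // _; apply: hn; exists w.
  have := @probability_setT _ _ _ (P th0); rewrite e measure0 => /eqP.
  by rewrite eq_sym (@eqe R) oner_eq0.
have [t0 _] : exists t0 : TXh, True.
  case: (pselect (exists t : TXh, True)) => // hn; exfalso.
  have := Q1 (X 0 w); rewrite big1 => [/eqP|y _]; first by rewrite eq_sym oner_eq0.
  by case: hn; exists y.
have hIv : Iv p Q < Rs.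
  rewrite -lte_fin; apply: le_lt_trans hI.
  by apply: ereal_sup_ubound; exists th0.
have hD0 : D0 p Q d <= D.
  rewrite -lee_fin; apply: le_trans QD.
  by apply: ereal_sup_ubound; exists th0.
have [n [M [c [e [n0 hrate hdist]]]]] := coding p0 p1 Q0 Q1 d0 t0 hIv eps0.
exists n, M, (fun t => e [ffun i => tnth t i]), (fun j => [tuple c j i | i < n]).
split => //.
have -> : (fun w => dn d (Xvec X n w) ([tuple c (e [ffun i => tnth (Xvec X n w) i]) i | i < n]))
   = (fun w => dbar d (xf X n w) (c (e (xf X n w)))).
  apply/funext => w'; rewrite Xvec_xf /dn /dbar; congr (_ * _).
  by apply: eq_bigr => i _; rewrite !tnth_mktuple /xf ffunE.
apply: le_trans (lE_le mX th0 iid (fun x => dbar d x (c (e x)))) _.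
by rewrite lee_fin; apply: le_trans hdist _; rewrite lerD2r.
Qed.
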